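(* For every integer $m\geq 1$, \[ \begin{pmatrix}\delta^s_2\big((s_1^2+s_2^2)^m\big)\\ -\delta^s_1\big((s_1^2+s_2^2)^m\big)\end{pmatrix}\in \mathrm{Vect}(\mathbb{C}^s_{\langle 2\rangle}\,|\,\tau), \] where $s_1,s_2$, $\tau$, $\delta^s$ and $\mathrm{Vect}(\mathbb{C}^s_{\langle 2\rangle}|\tau)$ are as in the context with $n=2$.
   Context: Let $n\geq 1$ (here $n=2$), let $\{e_1,\dots,e_n\}$ be an orthonormal basis of $\mathbb{C}^n$ and $\{f_1,\dots,f_n\}$ the standard basis of $\mathbb{C}^n$. The full Fock space is $\mathcal{F}(\mathbb{C}^n)=\mathbb{C}1\oplus\bigoplus_{k\geq1}(\mathbb{C}^n)^{\otimes k}$ with vacuum vector $1$. For a word $w=i_1\cdots i_k$ over the alphabet $[n]=\{1,\dots,n\}$ put $e_w=e_{i_1}\otimes\cdots\otimes e_{i_k}$ (and $e_\epsilon=1$ for the empty word). Let $l_j$ be the left creation operator $l_je_w=e_{jw}$, and $s_j=l_j+l_j^*$ ($j=1,\dots,n$); these form a free semicircular system with respect to the vacuum state $\tau(x)=\langle x1,1\rangle$. Let $\mathbb{C}^s_{\langle n\rangle}$ be the unital algebra generated by $s_1,\dots,s_n$. The cyclic gradient $\delta^s=(\delta^s_1,\dots,\delta^s_n):\mathbb{C}^s_{\langle n\rangle}\to(\mathbb{C}^s_{\langle n\rangle})^n$ is the linear map with $\delta^s(s_{i_1}\cdots s_{i_p})=\sum_{j=1}^p s_{i_{j+1}}\cdots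 s_{i_p}s_{i_1}\cdots s_{i_{j-1}}\otimes f_{i_j}$ (identifying $(\mathbb{C}^s_{\langle n\rangle})^n\cong \mathbb{C}^s_{\langle n\rangle}\otimes\mathbb{C}^n$), i.e. $\delta^s_j(s_{i_1}\cdots s_{i_p})=\sum_{m:\,i_m=j}s_{i_{m+1}}\cdots s_{i_p}s_{i_1}\cdots s_{i_{m-1}}$. The free divergence-free vector field is $\mathrm{Vect}(\mathbb{C}^s_{\langle n\rangle}|\tau)=\{(p_1,\dots,p_n)\in(\mathbb{C}^s_{\langle n\rangle})^n : \sum_{j=1}^n\tau(p_j\,\delta^s_j[r])=0 \text{ for all } r\in\mathbb{C}^s_{\langle n\rangle}\}$. *)

(* Defs.v *)
From mathcomp Require Import all_boot all_algebra.
From mathcomp Require Export complex Rstruct.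
Set Implicit Arguments. Unset Strict Implicit. Unset Printing Implicit Defensive.
Import GRing.Theory.
Local Open Scope ring_scope.

Definition CC : comRingType := Rdefinitions.R[i].

Section FreeSemicircular.
Variables (C : comRingType) (n : nat).

(* Words over the alphabet [n] = 'I_n (letter i+1 of the paper is (i : 'I_n)). *)
Definition word := seq 'I_n.

(* Vectors of the (algebraic) full Fock space: coefficient functions on words;
   e_w is the indicator of the word w, the vacuum 1 is e_epsilon. *)
Definition fock := word -> C.
Definition vac : fock := fun w => (w == [::])%:R.

(* left creation l_j e_w = e_{jw} *)
Definition lcre (j : 'I_n) (v : fock) : fock :=
  fun w => if w is i :: w' then (i == j)%:R * v w' else 0.
(* its adjoint l_j^* e_{iw} = [i = j] e_w, l_j^* 1 = 0 *)
Definition lann (j : 'I_n) (v : fock) : fock := fun w => v (j :: w).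
Definition sop (j : 'I_n) (v : fock) : fock := fun w => lcre j v w + lann j v w.

Definition word_op (w : word) (v : fock) : fock := foldr sop v w.

(* Elements of C^s_<n>: finite linear combinations  sum c * s_w  of monomials
   s_w = s_{i_1}...s_{i_k} (s_1,...,s_n are algebraically free). *)
Definition ncpoly := seq (C * word).
Definition ncadd (p q : ncpoly) : ncpoly := p ++ q.
Definition ncopp (p : ncpoly) : ncpoly := [seq (- t.1, t.2) | t <- p].
Definition ncmul (p q : ncpoly) : ncpoly :=
  [seq (a.1 * b.1, a.2 ++ b.2) | a <- p, b <- q].
Definition ncone : ncpoly := [:: (1, [::])].
Definition ncexp (p : ncpoly) (m : nat) : ncpoly := iter m (ncmul p) ncone.
Definition sgen (j : 'I_n) : ncpoly := [:: (1, [:: j])].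

(* vacuum state tau(x) = < x 1, 1 > *)
Definition tau (p : ncpoly) : C := \sum_(t <- p) t.1 * word_op t.2 vac [::].

(* cyclic gradient on a monomial:
   delta_j (s_{i_1}...s_{i_p}) = sum_{m : i_m = j} s_{i_{m+1}}...s_{i_p} s_{i_1}...s_{i_{m-1}}
   (0-based index k = m - 1) *)
Definition cyc_word (j : 'I_n) (w : word) : ncpoly :=
  [seq (1, drop k.+1 w ++ take k w) | k <- iota 0 (size w) & nth j w k == j].
Definition cycgrad (j : 'I_n) (p : ncpoly) : ncpoly :=
  flatten [seq [seq (t.1 * c.1, c.2) | c <- cyc_word j t.2] | t <- p].

Definition in_Vect (P : 'I_n -> ncpoly) : Prop :=
  forall r : ncpoly, \sum_(j < n) tau (ncmul (P j) (cycgrad j r)) = 0.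

End FreeSemicircular.

Definition idx1 : 'I_2 := ord0.
Definition idx2 : 'I_2 := ord_max.

(* Main.v *)
Require Import Defs.
From mathcomp Require Import all_boot all_algebra.
From mathcomp Require Import ring zify.
Set Implicit Arguments. Unset Strict Implicit. Unset Printing Implicit Defensive.
Import GRing.Theory.
Local Open Scope ring_scope.

Section Gen.
Variables (C : comNzRingType) (n : nat).
Local Notation W := (seq 'I_n).

Fixpoint spl (j : 'I_n) (a : W) : seq (W * W) :=
  if a is x :: a' then
    let r := [seq (x :: ps.1, ps.2) | ps <- spl j a'] in
    if x == j then ([::], a') :: r else r
  else [::].

Lemma spl_mem j a ps : ps \in spl j a -> a = ps.1 ++ j :: ps.2.
Proof.
elim: a ps => [|x a IH] ps //=.
have H : ps \in [seq (x :: ps0.1, ps0.2) | ps0 <- spl j a] -> x :: a = ps.1 ++ j :: ps.2.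
  by case/mapP => qs /IH -> ->.
case: eqP => [Exj|_]; last exact: H.
by rewrite inE => /orP [/eqP -> //=|]; [rewrite Exj | exact: H].
Qed.

Lemma spl_size1 j a ps : ps \in spl j a -> (size ps.1 < size a)%N.
Proof. by move/spl_mem => ->; rewrite size_cat /=; lia. Qed.
Lemma spl_size2 j a ps : ps \in spl j a -> (size ps.2 < size a)%N.
Proof. by move/spl_mem => ->; rewrite size_cat /=; lia. Qed.

Lemma sum_spl_cons j x a (F : W * W -> C) :
  \sum_(ps <- spl j (x :: a)) F ps =
  (if x == j then F ([::], a) else 0) + \sum_(ps <- spl j a) F (x :: ps.1, ps.2).
Proof. by rewrite /=; case: eqP => _; rewrite ?big_cons big_map ?add0r. Qed.

Lemma swap_spl i j (G : W -> W -> W -> C) b :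
  \sum_(ps <- spl i b) \sum_(qs <- spl j ps.2) G ps.1 qs.1 qs.2 =
  \sum_(ps <- spl j b) \sum_(qs <- spl i ps.1) G qs.1 qs.2 ps.2.
Proof.
elim: b G => [|c b IH] G; first by rewrite !big_nil.
rewrite sum_spl_cons (IH (fun x y z => G (c :: x) y z)) sum_spl_cons.
rewrite big_nil if_same add0r.
under [in RHS]eq_bigr => ps _ do rewrite sum_spl_cons.
rewrite big_split /=; congr (_ + _).
by case: eqP => _ //; rewrite big1.
Qed.

Lemma sum_spl_cat j a b (F : W * W -> C) :
  \sum_(ps <- spl j (a ++ b)) F ps =
  \sum_(ps <- spl j a) F (ps.1, ps.2 ++ b) + \sum_(ps <- spl j b) F (a ++ ps.1, ps.2).
Proof.
elim: a F => [|x a IH] F /=; first by rewrite big_nil add0r; apply: eq_bigr => -[].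
rewrite sum_spl_cons IH sum_spl_cons addrA; congr (_ + _).
Qed.

Lemma cyc2 i j (F : W -> W -> C) b :
  \sum_(ps <- spl i b) \sum_(qs <- spl j (ps.2 ++ ps.1)) F qs.1 qs.2 =
  \sum_(ps <- spl j b) \sum_(qs <- spl i (ps.2 ++ ps.1)) F qs.2 qs.1.
Proof.
under eq_bigr => ps _ do rewrite sum_spl_cat /=.
under [in RHS]eq_bigr => ps _ do rewrite sum_spl_cat /=.
rewrite !big_split /= addrC; congr (_ + _).
- symmetry; exact: (swap_spl j i (fun p y z => F (z ++ p) y)).
- exact: (swap_spl i j (fun p y z => F y (z ++ p))).
Qed.


Definition fk (w : W) : fock C n := word_op w (@vac C n).
Definition T (w : W) : C := fk w [::].

Lemma fk_cons j w u : fk (j :: w) u =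
  (if u is i :: u' then (i == j)%:R * fk w u' else 0) + fk w (j :: u).
Proof. by []. Qed.

Lemma T_nil : T [::] = 1.
Proof. by []. Qed.

Lemma fk_split k : forall w, (size w <= k)%N -> forall i u,
  fk w (i :: u) = \sum_(ps <- spl i w) T ps.1 * fk ps.2 u.
Proof.
elim: k => [|k IH] [|j w] Hs i u; rewrite ?big_nil //.
have {}Hs : (size w <= k)%N by [].
rewrite fk_cons sum_spl_cons T_nil mul1r eq_sym.
have -> : (if j == i then fk w u else 0) = (j == i)%:R * fk w u.
  by case: (j == i); rewrite ?mul1r ?mul0r.
congr (_ + _).
rewrite (IH w Hs j (i :: u)).
rewrite (eq_big_seq (fun ps => T ps.1 * \sum_(qs <- spl i ps.2) T qs.1 * fk qs.2 u)); last first.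
  move=> ps /spl_size2 Hp; have Hk : (size ps.2 <= k)%N by lia.
  by rewrite (IH ps.2 Hk).
rewrite (eq_big_seq (fun ps => (\sum_(qs <- spl j ps.1) T qs.1 * T qs.2) * fk ps.2 u)
  (r := spl i w)); last first.
  move=> ps /spl_size1 Hp; have Hk : (size ps.1 <= k)%N by lia.
  by rewrite {1}/T fk_cons (IH ps.1 Hk) add0r.
under eq_bigr => ps _ do rewrite big_distrr /=.
under [in RHS]eq_bigr => ps _ do rewrite big_distrl /=.
rewrite (swap_spl j i (fun p y z => T p * (T y * fk z u))).
by apply: eq_bigr => ps _; apply: eq_bigr => qs _; rewrite mulrA.
Qed.

Lemma T_cons j a : T (j :: a) = \sum_(ps <- spl j a) T ps.1 * T ps.2.
Proof. by rewrite /T fk_cons add0r (@fk_split (size a)). Qed.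


Lemma T_rcons_k k : forall a, (size a <= k)%N -> forall j,
  T (a ++ [:: j]) = \sum_(ps <- spl j a) T ps.1 * T ps.2.
Proof.
elim: k => [|k IH] [|i a] Hs j //; try by rewrite cat0s T_cons !big_nil.
have {}Hs : (size a <= k)%N by [].
rewrite cat_cons T_cons sum_spl_cat sum_spl_cons /= big_nil addr0 sum_spl_cons.
rewrite cats0 T_nil mulr1 mul1r eq_sym addrC; congr (_ + _).
rewrite (eq_big_seq (fun ps => T ps.1 * \sum_(qs <- spl j ps.2) T qs.1 * T qs.2)); last first.
  move=> ps /spl_size2 Hp; have Hk : (size ps.2 <= k)%N by lia.
  by rewrite (IH ps.2 Hk).
under [in RHS]eq_bigr => ps _ do rewrite T_cons big_distrl /=.
under eq_bigr => ps _ do rewrite big_distrr /=.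
rewrite (swap_spl i j (fun p y z => T p * (T y * T z))).
by apply: eq_bigr => ps _; apply: eq_bigr => qs _; rewrite mulrA.
Qed.

Lemma T_rcons a j : T (a ++ [:: j]) = \sum_(ps <- spl j a) T ps.1 * T ps.2.
Proof. exact: (@T_rcons_k (size a)). Qed.

Lemma T_rot1 j a : T (j :: a) = T (a ++ [:: j]).
Proof. by rewrite T_cons T_rcons. Qed.

Lemma T_cyc x y : T (x ++ y) = T (y ++ x).
Proof.
elim: x y => [|j x IH] y; first by rewrite cats0.
by rewrite cat_cons T_rot1 -catA IH -catA.
Qed.


Section Q.
Variable b : W.

Fixpoint Qf (k : nat) (a : W) : C :=
  match k, a with
  | k'.+1, j :: a' =>
      \sum_(ps <- spl j a') (Qf k' ps.1 * T ps.2 + T ps.1 * Qf k' ps.2)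
      + \sum_(ps <- spl j b) T (a' ++ ps.2 ++ ps.1)
  | _, _ => 0
  end.

Definition Q a := Qf (size a) a.

Lemma Qf_eq k1 : forall k2 a, (size a <= k1)%N -> (size a <= k2)%N -> Qf k1 a = Qf k2 a.
Proof.
elim: k1 => [|k1 IH] [|k2] [|j a] //= H1 H2; congr (_ + _).
apply: eq_big_seq => -[p s] Hps.
have := spl_size1 Hps; have := spl_size2 Hps => /= h2 h1.
rewrite (IH k2 p) ?(IH k2 s) //; lia.
Qed.

Lemma Q_nil : Q [::] = 0.
Proof. by []. Qed.

Lemma Q_cons j a : Q (j :: a) =
  \sum_(ps <- spl j a) (Q ps.1 * T ps.2 + T ps.1 * Q ps.2)
  + \sum_(ps <- spl j b) T (a ++ ps.2 ++ ps.1).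
Proof.
rewrite /Q /=; congr (_ + _); apply: eq_big_seq => -[p s] Hps.
have := spl_size1 Hps; have := spl_size2 Hps => /= h2 h1.
by rewrite (@Qf_eq (size a) (size p)) ?(@Qf_eq (size a) (size s)) //; lia.
Qed.


Lemma Q_rcons_k k : forall a, (size a <= k)%N -> forall j,
  Q (a ++ [:: j]) =
  \sum_(ps <- spl j a) (Q ps.1 * T ps.2 + T ps.1 * Q ps.2)
  + \sum_(ps <- spl j b) T (a ++ ps.2 ++ ps.1).
Proof.
elim: k => [|k IH] [|i a] Hs j //; try by rewrite cat0s Q_cons big_nil.
have {}Hs : (size a <= k)%N by [].
rewrite cat_cons Q_cons sum_spl_cat sum_spl_cons /= big_nil addr0.
rewrite cats0 Q_nil T_nil mulr0 mulr1 addr0.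
rewrite sum_spl_cons Q_nil T_nil mul0r mul1r add0r eq_sym.
set IF := (if i == j then Q a else 0).
have E1 : \sum_(ps <- spl i a) (Q ps.1 * T (ps.2 ++ [:: j]) + T ps.1 * Q (ps.2 ++ [:: j])) =
  \sum_(ps <- spl i a) \sum_(qs <- spl j ps.2) (Q ps.1 * T qs.1 * T qs.2)
  + \sum_(ps <- spl i a) \sum_(qs <- spl j ps.2) (T ps.1 * Q qs.1 * T qs.2)
  + \sum_(ps <- spl i a) \sum_(qs <- spl j ps.2) (T ps.1 * T qs.1 * Q qs.2)
  + \sum_(ps <- spl i a) \sum_(qs <- spl j b) (T ps.1 * T (ps.2 ++ qs.2 ++ qs.1)).
  rewrite -!big_split /=; apply: eq_big_seq => -[p s] Hps /=.
  have := spl_size2 Hps => /= h2; have Hk : (size s <= k)%N := leq_trans (ltnW h2) Hs.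
  rewrite (IH s Hk) T_rcons mulrDr big_distrr big_distrr /= big_distrr /=.
  rewrite -!addrA; congr (_ + _); first by apply: eq_bigr => qs _; rewrite mulrA.
  rewrite addrA -big_split /=; congr (_ + _); apply: eq_bigr => qs _.
  by rewrite mulrDr !mulrA.
have E2 : \sum_(ps <- spl i b) T ((a ++ [:: j]) ++ ps.2 ++ ps.1) =
  \sum_(ps <- spl i b) \sum_(qs <- spl j (ps.2 ++ ps.1)) T qs.1 * T (qs.2 ++ a)
  + \sum_(ps <- spl i b) \sum_(qs <- spl j a) T (ps.2 ++ ps.1 ++ qs.1) * T qs.2.
  rewrite -big_split; apply: eq_bigr => ps _ /=.
  rewrite -catA cat1s T_cyc cat_cons T_cons sum_spl_cat /=.
  by congr (_ + _); apply: eq_bigr => qs _; rewrite catA.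
have E3 : \sum_(ps <- spl j a) (Q (i :: ps.1) * T ps.2 + T (i :: ps.1) * Q ps.2) =
  \sum_(ps <- spl j a) \sum_(qs <- spl i ps.1) (Q qs.1 * T qs.2 * T ps.2)
  + \sum_(ps <- spl j a) \sum_(qs <- spl i ps.1) (T qs.1 * Q qs.2 * T ps.2)
  + \sum_(ps <- spl j a) \sum_(qs <- spl i ps.1) (T qs.1 * T qs.2 * Q ps.2)
  + \sum_(ps <- spl j a) \sum_(qs <- spl i b) (T (ps.1 ++ qs.2 ++ qs.1) * T ps.2).
  rewrite -!big_split /=; apply: eq_bigr => ps _.
  rewrite Q_cons T_cons mulrDl !big_distrl /=.
  under eq_bigr => qs _ do rewrite mulrDl.
  rewrite big_split /=; ring.
have E4 : \sum_(ps <- spl j b) T ((i :: a) ++ ps.2 ++ ps.1) =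
  \sum_(ps <- spl j b) \sum_(qs <- spl i a) T qs.1 * T (qs.2 ++ ps.2 ++ ps.1)
  + \sum_(ps <- spl j b) \sum_(qs <- spl i (ps.2 ++ ps.1)) T (a ++ qs.1) * T qs.2.
  rewrite -big_split; apply: eq_bigr => ps _ /=.
  by rewrite T_cons sum_spl_cat.
rewrite E1 E2 E3 E4.
have S1 : \sum_(ps <- spl i a) \sum_(qs <- spl j ps.2) Q ps.1 * T qs.1 * T qs.2
  = \sum_(ps <- spl j a) \sum_(qs <- spl i ps.1) Q qs.1 * T qs.2 * T ps.2
  := swap_spl i j (fun p y z => Q p * T y * T z) a.
have S2 : \sum_(ps <- spl i a) \sum_(qs <- spl j ps.2) T ps.1 * Q qs.1 * T qs.2
  = \sum_(ps <- spl j a) \sum_(qs <- spl i ps.1) T qs.1 * Q qs.2 * T ps.2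
  := swap_spl i j (fun p y z => T p * Q y * T z) a.
have S3 : \sum_(ps <- spl i a) \sum_(qs <- spl j ps.2) T ps.1 * T qs.1 * Q qs.2
  = \sum_(ps <- spl j a) \sum_(qs <- spl i ps.1) T qs.1 * T qs.2 * Q ps.2
  := swap_spl i j (fun p y z => T p * T y * Q z) a.
have S4 : \sum_(ps <- spl i a) \sum_(qs <- spl j b) T ps.1 * T (ps.2 ++ qs.2 ++ qs.1)
  = \sum_(ps <- spl j b) \sum_(qs <- spl i a) T qs.1 * T (qs.2 ++ ps.2 ++ ps.1).
  exact: exchange_big.
have S5 : \sum_(ps <- spl i b) \sum_(qs <- spl j (ps.2 ++ ps.1)) T qs.1 * T (qs.2 ++ a)
  = \sum_(ps <- spl j b) \sum_(qs <- spl i (ps.2 ++ ps.1)) T (a ++ qs.1) * T qs.2.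
  have := cyc2 i j (fun x y => T x * T (y ++ a)) b; rewrite /= => ->.
  by apply: eq_bigr => ps _; apply: eq_bigr => qs _; rewrite T_cyc mulrC.
have S6 : \sum_(ps <- spl i b) \sum_(qs <- spl j a) T (ps.2 ++ ps.1 ++ qs.1) * T qs.2 =
   \sum_(ps <- spl j a) \sum_(qs <- spl i b) T (ps.1 ++ qs.2 ++ qs.1) * T ps.2.
  rewrite exchange_big; apply: eq_bigr => ps _; apply: eq_bigr => qs _.
  by rewrite catA [in LHS]T_cyc.
rewrite S1 S2 S3 S4 S5 S6.
ring.
Qed.

Lemma Q_rcons a j : Q (a ++ [:: j]) =
  \sum_(ps <- spl j a) (Q ps.1 * T ps.2 + T ps.1 * Q ps.2)
  + \sum_(ps <- spl j b) T (a ++ ps.2 ++ ps.1).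
Proof. exact: (@Q_rcons_k (size a)). Qed.

Lemma Q_cyc x y : Q (x ++ y) = Q (y ++ x).
Proof.
elim: x y => [|j x IH] y; first by rewrite cats0.
have E : Q (j :: (x ++ y)) = Q ((x ++ y) ++ [:: j]) by rewrite Q_cons Q_rcons.
by rewrite cat_cons E -catA IH -catA.
Qed.

End Q.

Lemma cyc_gen (X : Type) j (g : W -> W -> X) w :
  [seq g (drop k.+1 w) (take k w) | k <- iota 0 (size w) & nth j w k == j] =
  [seq g ps.2 ps.1 | ps <- spl j w].
Proof.
elim: w g => [|x w IH] g //.
have -> : iota 0 (size (x :: w)) = (0 :: [seq (1 + k)%N | k <- iota 0 (size w)])%N.
  by rewrite /= -(iotaDl 1 0).
rewrite /= filter_map.
set l := [seq k <- iota 0 (size w) | _].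
have El : l = [seq k <- iota 0 (size w) | nth j w k == j] by apply: eq_filter.
have Et : [seq g (drop k w) (take k (x :: w)) | k <- [seq (1 + k)%N | k <- l]] =
   [seq g ps.2 ps.1 | ps <- [seq (x :: ps.1, ps.2) | ps <- spl j w]].
  by rewrite El -!map_comp -(IH (fun a b => g a (x :: b))); apply: eq_map.
by case: eqP => _ /=; rewrite Et // drop0.
Qed.

Lemma cyc_word_spl j w :
  cyc_word C j w = [seq (1, ps.2 ++ ps.1) | ps <- spl j w].
Proof. exact: (cyc_gen j (fun a b => (1, a ++ b))). Qed.

Lemma tau_ncmul (A B : ncpoly C n) :
  tau (ncmul A B) = \sum_(a <- A) \sum_(c <- B) a.1 * c.1 * T (a.2 ++ c.2).
Proof. by rewrite /tau /ncmul big_allpairs_dep. Qed.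

Lemma sum_cycgrad j (r : ncpoly C n) (F : C * W -> C) :
  \sum_(c <- cycgrad j r) F c =
  \sum_(t <- r) \sum_(ps <- spl j t.2) F (t.1 * 1, ps.2 ++ ps.1).
Proof.
rewrite /cycgrad big_flatten big_map; apply: eq_bigr => t _.
by rewrite big_map cyc_word_spl big_map.
Qed.

Definition Kf j (a v : W) := \sum_(ps <- spl j v) T (a ++ ps.2 ++ ps.1).

Lemma tau_ncopp (A B : ncpoly C n) : tau (ncmul (ncopp A) B) = - tau (ncmul A B).
Proof.
rewrite !tau_ncmul /ncopp big_map -sumrN; apply: eq_bigr => a _.
rewrite -sumrN; apply: eq_bigr => c _ /=; by rewrite !mulNr.
Qed.

Lemma tau_term (q r : ncpoly C n) i j :
  tau (ncmul (cycgrad i q) (cycgrad j r)) =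
  \sum_(t <- r) t.1 * \sum_(u <- q) u.1 * \sum_(ps <- spl i u.2) Kf j (ps.2 ++ ps.1) t.2.
Proof.
rewrite tau_ncmul sum_cycgrad.
under eq_bigr => u _ do under eq_bigr => ps _ do rewrite sum_cycgrad.
symmetry.
under [in LHS]eq_bigr => t _ do rewrite mulr_sumr.
rewrite exchange_big; apply: eq_bigr => u _.
under eq_bigr => t _ do rewrite mulrA mulr_sumr.
rewrite exchange_big; apply: eq_bigr => ps _; apply: eq_bigr => t _.
rewrite /Kf big_distrr; apply: eq_bigr => qs _ /=.
ring.
Qed.

Lemma key (q r : ncpoly C n) i1 i2 :
  (forall v, \sum_(u <- q) u.1 * (\sum_(ps <- spl i2 u.2) Q v (ps.1 ++ i1 :: ps.2)
        - \sum_(ps <- spl i1 u.2) Q v (ps.1 ++ i2 :: ps.2)) = 0) ->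
  tau (ncmul (cycgrad i2 q) (cycgrad i1 r)) +
  tau (ncmul (ncopp (cycgrad i1 q)) (cycgrad i2 r)) = 0.
Proof.
move=> HZ.
rewrite tau_ncopp !tau_term -sumrB big1 // => t _.
rewrite -mulrBr -sumrB.
suff -> : \sum_(u <- q) (u.1 * \sum_(ps <- spl i2 u.2) Kf i1 (ps.2 ++ ps.1) t.2 -
             u.1 * \sum_(ps <- spl i1 u.2) Kf i2 (ps.2 ++ ps.1) t.2) = 0 by rewrite mulr0.
rewrite -[RHS](HZ t.2); apply: eq_bigr => u _; rewrite -mulrBr; congr (_ * _).
set v := t.2.
have KE : forall j a, Kf j a v = Q v (j :: a) -
    \sum_(ps <- spl j a) (Q v ps.1 * T ps.2 + T ps.1 * Q v ps.2).
  by move=> j a; rewrite Q_cons /Kf [X in X - _]addrC addrK.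
have HE : \sum_(ps <- spl i2 u.2) \sum_(qs <- spl i1 (ps.2 ++ ps.1))
            (Q v qs.1 * T qs.2 + T qs.1 * Q v qs.2) =
          \sum_(ps <- spl i1 u.2) \sum_(qs <- spl i2 (ps.2 ++ ps.1))
            (Q v qs.1 * T qs.2 + T qs.1 * Q v qs.2).
  have := cyc2 i2 i1 (fun x y => Q v x * T y + T x * Q v y) u.2; rewrite /= => ->.
  by apply: eq_bigr => ps _; apply: eq_bigr => qs _; rewrite addrC mulrC [T _ * _]mulrC.
under eq_bigr => ps _ do rewrite KE -cat_cons Q_cyc.
under [in X in _ - X]eq_bigr => ps _ do rewrite KE -cat_cons Q_cyc.
rewrite !sumrB HE.
set A := \sum_(i <- spl i2 u.2) _; set B := \sum_(i <- spl i1 u.2) _.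
by rewrite opprB addrA addrNK.
Qed.


End Gen.

Section Two.
Variable C : comNzRingType.
Local Notation W2 := (seq 'I_2).

Definition ZF (L : W2 -> C) (p : ncpoly C 2) :=
  \sum_(u <- p) u.1 * (\sum_(ps <- spl idx2 u.2) L (ps.1 ++ idx1 :: ps.2)
           - \sum_(ps <- spl idx1 u.2) L (ps.1 ++ idx2 :: ps.2)).

Lemma sum_ncmul (A P : ncpoly C 2) (F : C * W2 -> C) :
  \sum_(x <- ncmul A P) F x = \sum_(a <- A) \sum_(t <- P) F (a.1 * t.1, a.2 ++ t.2).
Proof. by rewrite /ncmul big_allpairs_dep. Qed.

Lemma Zstep L (p : ncpoly C 2) :
  ZF L (ncmul [:: (1 * 1, [:: idx1; idx1]); (1 * 1, [:: idx2; idx2])] p) =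
  ZF (fun x => L (idx1 :: idx1 :: x) + L (idx2 :: idx2 :: x)) p.
Proof.
have E12 : (idx1 == idx2) = false by [].
have E21 : (idx2 == idx1) = false by [].
rewrite /ZF sum_ncmul !big_cons big_nil addr0 -big_split; apply: eq_bigr => t _ /=.
rewrite !big_cons !big_map /=.
rewrite !big_split /=.
ring.
Qed.

Lemma Zq (m : nat) : forall (L : W2 -> C),
  ZF L (ncexp (ncadd (ncmul (sgen C idx1) (sgen C idx1))
                          (ncmul (sgen C idx2) (sgen C idx2))) m) = 0.
Proof.
elim: m => [|m IH] L.
  by rewrite /ZF /ncexp /= /ncone big_cons big_nil /= !big_nil subrr mulr0 addr0.
exact: (etrans (Zstep L _) (IH _)).
Qed.

End Two.

Theorem proposition2p5 (m : nat) : (1 <= m)%N ->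
  let s1 := sgen CC idx1 in
  let s2 := sgen CC idx2 in
  let q := ncexp (ncadd (ncmul s1 s1) (ncmul s2 s2)) m in
  in_Vect (fun j : 'I_2 =>
             if j == idx1 then cycgrad idx2 q else ncopp (cycgrad idx1 q)).
Proof.
move=> _ s1 s2 q r.
rewrite big_ord_recl big_ord1.
have L2 : lift ord0 (ord0 : 'I_1) = idx2 by apply: val_inj.
have E1 : ((ord0 : 'I_2) == idx1) = true by [].
have E2 : (idx2 == idx1) = false by [].
rewrite L2 E1 E2.
apply: key => v.
exact: (Zq m (Q _ v)).
Qed.
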